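(* Assume the standing setting and notation described in the context. Setting \[I_n=S^1\setminus B_{\frac12\mathrm{dist}(x_n,y_n)}(y_n),\] one has $\mathbb{P}(\nu_n(I_n)\ge 1/2)\ge 1/2$ for all $n\in\mathbb{Z}$.
   Context: Standing setting: $d\ge2$, $\mu$ a Borel probability on $\mathrm{GL}(\mathbb{R}^d)$ with $\int|\log\sigma_j(a)|d\mu(a)<\infty$ for all singular values. $\nu$ is an ergodic $\mu$-stationary probability on the space of complete flags $F=(S_0,\dots,S_d)$ in $\mathbb{R}^d$; for fixed $i\in\{1,\dots,d-1\}$, $F_i$ is $F$ with $S_i$ removed, $\nu_i$ is the projection of $\nu$, $\nu$ is the unique $\mu$-stationary probability projecting to $\nu_i$, and $x_i\mapsto\nu_{x_i}$ is a fixed Borel disintegration of $\nu$ over $\nu_i$. $(A(n))_{n\in\mathbb{Z}}$ i.i.d. with law $\mu$, $(F(n))_n$ random flags with law $\nu$, $((A(n),F(n)))_n$ stationary, $F(n)$ independent of $(A(m))_{m\ge n}$, $A(n+k)\cdots A(n)F(n)=F(n+k+1)$ for $k\ge0$; $S_j(n)$ the $j$-dimensional subspace of $F(n)$, $F_i(n)$ the incomplete flag. $\chi_1+\cdots+\chi_j=\mathbb{E}[\log|\det_{S_j(0)}(A(0))|]$. $\kappa_i=\mathbb{E}[\log\frac{dA(0)\nu_{F_i(0)}}{d\nu_{F_i(1)}}(F(1))]>0$ is assumed. $S_i'(n)$ is the (a.s. unique) $i$-dimensional subspace with $S_{i-1}(n)\subset S_i'(n)\subset S_{i+1}(n)$ and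 $\lim_k\frac1k\log|\det_{S_i'(n)}(A(n+k-1)\cdots A(n))|=\chi_1+\cdots+\chi_{i-1}+\chi_{i+1}$. Via a fixed Borel choice of isometries, the projective line of $S_{i+1}/S_{i-1}$ (angle metric) of each incomplete flag is identified with the circle $S^1$ with $\mathrm{dist}$ = half arc length. $\nu_n$ is the image of $\nu_{F_i(n)}$ on $S^1$, $x_n$, $y_n$ the points corresponding to $S_i(n)$, $S_i'(n)$; $B_r(x)$ is the $\mathrm{dist}$-ball. *)

(* Defs.v *)
From HB Require Import structures.
From mathcomp Require Import all_boot all_order all_algebra.
From mathcomp Require Import all_classical all_reals all_analysis.
From mathcomp Require Import lebesgue_measure measurable_realfun.
Set Implicit Arguments. Unset Strict Implicit. Unset Printing Implicit Defensive.
Import Order.TTheory GRing.Theory Num.Theory.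
Local Open Scope classical_set_scope.
Local Open Scope ring_scope.

Section Circle.
Variable R : realType.
Definition S1 : set (R * R) := [set u | u.1 ^+ 2 + u.2 ^+ 2 = 1].
(* dist = half of the arc length: half the angle between the unit vectors. *)
Definition cdist (u v : R * R) : R := acos (u.1 * v.1 + u.2 * v.2) / 2.
Definition cball (y : R * R) (r : R) : set (R * R) :=
  [set z | S1 z /\ cdist z y < r].
End Circle.

Local Open Scope ereal_scope.

Definition indep_rv (R : realType) d (Om : measurableType d) (P : probability Om R)
  d1 (T1 : measurableType d1) d2 (T2 : measurableType d2)
  (X : Om -> T1) (Y : Om -> T2) : Prop :=
  forall B1 B2, measurable B1 -> measurable B2 ->
    P (X @^-1` B1 `&` Y @^-1` B2) = P (X @^-1` B1) * P (Y @^-1` B2).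

Definition disintegration (R : realType) d1 (Fl : measurableType d1)
  d2 (Fli : measurableType d2) (pi : Fl -> Fli) (nu : probability Fl R)
  (kappa : Fli -> probability Fl R) : Prop :=
  (forall B, measurable B -> measurable_fun [set: Fli] (fun x => kappa x B)) /\
  (forall B C, measurable B -> measurable C ->
     nu (B `&` pi @^-1` C) =
     \int[pushforward nu pi]_(x in C) kappa x B).

(* Main.v *)
Require Import Defs.
From HB Require Import structures.
From mathcomp Require Import all_boot all_order all_algebra.
From mathcomp Require Import all_classical all_reals all_analysis.
From mathcomp Require Import lebesgue_measure measurable_realfun.
Import Order.TTheory GRing.Theory Num.Theory.
Local Open Scope classical_set_scope.
Local Open Scope ring_scope.
From mathcomp Require Import lra.

Section AcosMeas.
Variable R : realType.

Definition clamp (x : R) : R := Num.max (-1) (Num.min 1 x).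

Lemma clamp_in x : -1 <= clamp x <= 1.
Proof.
rewrite /clamp; apply/andP; split; first by rewrite le_max lexx.
have h : (-1:R) <= 1 by lra.
by rewrite ge_max h /= ge_min lexx.
Qed.

Lemma clamp_id x : -1 <= x <= 1 -> clamp x = x.
Proof.
move=> /andP[h1 h2]; rewrite /clamp (min_r h2) (max_r h1) //.
Qed.

Lemma clamp_nd : {homo clamp : x y / x <= y}.
Proof.
move=> x y xy; rewrite /clamp.
by apply: le_max2 => //; apply: le_min2.
Qed.

Definition acosc (x : R) : R := acos (clamp x).

Lemma acosc_ni : {homo acosc : x y / x <= y >-> y <= x}.
Proof.
move=> x y xy; rewrite /acosc.
have hx := acos_def (clamp_in x); have hy := acos_def (clamp_in y).
case: hx => /andP[x0 xp] cx; case: hy => /andP[y0 yp] cy.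
rewrite leNgt; apply/negP => lt.
have hc : clamp x <= clamp y by apply: clamp_nd.
rewrite -cx -cy in hc.
have : cos (acos (clamp y)) < cos (acos (clamp x)).
  by rewrite ltr_cos // in_itv /=; apply/andP; split.

by rewrite ltNge hc.
Qed.

Lemma measurable_acosc : measurable_fun [set: R] acosc.
Proof.
by apply: nonincreasing_measurable => // x y xy; apply: acosc_ni.
Qed.

End AcosMeas.
Arguments clamp {R}.
Arguments acosc {R}.
Arguments clamp_in {R}.
Arguments clamp_id {R}.

Section Core.
Variable R : realType.
Local Open Scope ereal_scope.

Lemma core d (T : measurableType d) (mu : probability T R) (phi : T -> R)
  (mphi : measurable_fun [set: T] phi) (phi0 : forall t, (0 <= phi t)%R)
  (mA : measurable [set t | (1/2)%:E <= mu [set t' | (phi t / 2 <= phi t')%R]]) :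
  (1/2)%:E <= mu [set t | (1/2)%:E <= mu [set t' | (phi t / 2 <= phi t')%R]].
Proof.
set A := [set t | _] in mA *.
pose psi r := mu [set t' | (r <= phi t')%R].
have mle r : measurable [set t' | (r <= phi t')%R].
  rewrite (_ : [set t' | _] = phi @^-1` `[r, +oo[); last first.
    by apply/seteqP; split => t /=; rewrite in_itv /= andbT.
  by rewrite -[X in measurable X]setTI; apply: mphi => //; exact: measurable_itv.
have psi_ni r1 r2 : (r1 <= r2)%R -> psi r2 <= psi r1.
  move=> h; rewrite /psi; apply: le_measure; rewrite ?inE; [exact: mle|exact: mle|].
  by move=> t /= /(le_trans h).
have fin B : measurable B -> mu B = (fine (mu B))%:E.
  by move=> mB; rewrite fineK // (fin_num_measure mu B mB).
have mG : measurable (~` A) by exact: measurableC.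
suff hG : mu (~` A) <= (1/2)%:E.
  rewrite -(setCK A) probability_setC // (fin _ mG) -EFinB lee_fin.
  move: hG; rewrite (fin _ mG) lee_fin; lra.
have GE : ~` A = [set t | ~ ((1/2)%:E <= psi (phi t / 2)%R)] by [].
have [[r0 r0pos hr0]|nocase] :=
  pselect (exists2 r0 : R, (0 < r0)%R & (1/2)%:E <= psi r0).
- pose Sset := [set r | (1/2)%:E <= psi r].
  have Sne : Sset !=set0 by exists r0.
  have [hs|nhs] := pselect (has_sup Sset).
  + pose s := sup Sset.
    have r0s : (r0 <= s)%R by exact: sup_upper_bound.
    have s0 : (0 < s)%R by exact: lt_le_trans r0s.
    pose t' := (s * 3 / 2)%R.
    have ht' : psi t' < (1/2)%:E.
      rewrite ltNge; apply/negP => h.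
      have : (t' <= s)%R by exact: sup_upper_bound.
      rewrite /t'; lra.
    have sub : ~` A `<=` [set t'0 | (t' <= phi t'0)%R].
      move=> t; rewrite GE /= => nt.
      have : (s <= phi t / 2)%R.
        rewrite leNgt; apply/negP => lt.
        have eps0 : (0 < s - phi t / 2)%R by rewrite subr_gt0.
        have [e Se hlt] := sup_adherent eps0 hs.
        apply: nt; apply: le_trans Se _; apply: psi_ni.
        move: hlt; rewrite /s; lra.
      rewrite /t'; lra.
    apply: le_trans (ltW ht'); apply: le_measure; rewrite ?inE //; exact: mle.
  + have := (has_supPn Sne).1 nhs => hub.
    rewrite (_ : ~` A = set0) ?measure0 //.
    apply/seteqP; split => // t; rewrite GE /= => nt.
    have [y Sy lty] := hub (phi t / 2)%R.
    by apply: nt; apply: le_trans Sy _; apply: psi_ni; apply: ltW.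
- have hlt r : (0 < r)%R -> psi r < (1/2)%:E.
    move=> r0; rewrite ltNge; apply/negP => h; apply: nocase; by exists r.
  pose F (n : nat) := [set t | ((n.+1%:R)^-1 <= phi t)%R].
  have mF n : measurable (F n) by exact: mle.
  have ndF : nondecreasing_seq F.
    move=> n m nm; apply/subsetPset => t /=; apply: le_trans.
    rewrite lef_pV2 ?posrE // ler_nat; done.
  have UF : \bigcup_n F n = [set t | (0 < phi t)%R].
    apply/seteqP; split => t /=.
      by move=> [n _] /=; apply: lt_le_trans; rewrite invr_gt0.
    move=> pt; have [k hk] := ltr_add_invr pt.
    by exists k => //=; rewrite /F /=; apply: ltW; rewrite add0r in hk.
  have mU : measurable (\bigcup_n F n) by apply: bigcupT_measurable.
  have sub : ~` A `<=` \bigcup_n F n.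
    rewrite UF => t; rewrite GE /= => nt.
    rewrite lt_neqAle phi0 andbT; apply/negP => /eqP t0; apply: nt.
    rewrite -t0 mul0r /psi (_ : [set t' | _] = setT) ?probability_setT.
      by rewrite lee_fin; lra.
    by apply/seteqP; split => // x _ /=.
  apply: le_trans (le_measure _ _ _ sub) _; rewrite ?inE //.
  have hc := @nondecreasing_cvg_mu _ _ _ mu _ mF mU ndF.
  have hl : lim (mu \o F @ \oo) = mu (\bigcup_n F n) by apply: cvg_lim.
  apply: (@le_trans _ _ (lim (mu \o F @ \oo))); first by rewrite hl; exact: lexx.
  apply: lime_le; first by apply/cvg_ex; exists (mu (\bigcup_n F n)).
  by apply: nearW => n /=; apply: ltW; apply: hlt.
Qed.

End Core.

Section XsecMeas.
Variable R : realType.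
Local Open Scope ereal_scope.

Lemma xsec_meas d d' (X : measurableType d) (Y : measurableType d')
  (k : X -> probability Y R)
  (hk : forall U, measurable U -> measurable_fun [set: X] (fun x => k x U))
  (A : set (X * Y)) : measurable A ->
  measurable_fun [set: X] (fun x => k x (xsection A x)).
Proof.
pose phi A := fun x => k x (xsection A x).
pose XY := [set A | measurable A /\ measurable_fun [set: X] (phi A)].
suff : measurable `<=` XY by move=> + mA => /(_ A mA) [].
have phiM (A1 : set X) B : phi (A1 `*` B) = (fun x => k x B * (\1_A1 x)%:E).
  rewrite funeqE => x; rewrite indicE /phi/=.
  have [xA|xA] := boolP (x \in A1); first by rewrite mule1 in_xsectionX.
  by rewrite mule0 notin_xsectionX// measure0.
rewrite measurable_prod_measurableType.
set C := [set A `*` B | A in measurable & B in measurable].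
have CI : setI_closed C.
  move=> _ _ [X1 mX1 [X2 mX2 <-]] [Y1 mY1 [Y2 mY2 <-]].
  exists (X1 `&` Y1); first exact: measurableI.
  by exists (X2 `&` Y2); [exact: measurableI|rewrite setXI].
have CT : C setT by exists setT => //; exists setT => //; rewrite setXTT.
have CXY : C `<=` XY.
  move=> _ [A1 mA1 [B mB <-]]; split; first exact: measurableX.
  rewrite phiM.
  apply: emeasurable_funM => //; first exact: hk.
  by apply/measurable_EFinP; rewrite (_ : \1_ _ = mindic R mA1).
suff lsystemB : lambda_system setT XY by exact: lambda_system_subset.
split => //; [exact: CXY| |exact: xsection_ndseq_closed].
move=> A1 B BA [mA mphiA] [mB mphiB]; split; first exact: measurableD.
suff : phi (A1 `\` B) = (fun x => phi A1 x - phi B x).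
  by move=> ->; exact: emeasurable_funB.
rewrite funeqE => x; rewrite /phi/= xsectionD// measureD.
- by rewrite setIidr//; exact: le_xsection.
- exact: measurable_xsection.
- exact: measurable_xsection.
- apply: (le_lt_trans (probability_le1 _ _)); last exact: ltry.
  exact: measurable_xsection.
Qed.

End XsecMeas.

Section IntKer.
Context d1 d2 (X : measurableType d1) (Y : measurableType d2) (R : realType).
Variables (m : {measure set X -> \bar R}) (k : X -> probability Y R).
Hypothesis hk : forall U, measurable U -> measurable_fun [set: X] (fun x => k x U).
Local Open Scope ereal_scope.

Definition intker (A : set (X * Y)) := \int[m]_x k x (xsection A x).

Let ik0 : intker set0 = 0.
Proof. by rewrite /intker integral0_eq// => x _; rewrite xsection0 measure0. Qed.

Let ik_ge0 A : 0 <= intker A.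
Proof. by apply: integral_ge0 => // *. Qed.

Let ik_sigma_additive : semi_sigma_additive intker.
Proof.
move=> F mF tF mUF.
rewrite [X in _ --> X](_ : _ = \sum_(n <oo) intker (F n)).
  by apply/cvg_closeP; split; [exact: is_cvg_nneseries|rewrite closeE].
rewrite /intker -integral_nneseries//; last by move=> n; exact: xsec_meas.
apply: eq_integral => x _; apply/esym/cvg_lim => //=; rewrite xsection_bigcup.
apply: (measure_sigma_additive _ (trivIset_xsection tF)) => ?.
exact: measurable_xsection.
Qed.

HB.instance Definition _ := isMeasure.Build _ _ _ intker
  ik0 ik_ge0 ik_sigma_additive.

Definition ikm : {measure set (X * Y) -> \bar R}.
Proof. refine (intker : {measure set (X * Y) -> \bar R}); exact: hk. Defined.
Lemma ikmE A : ikm A = intker A. Proof. by []. Qed.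

End IntKer.
Arguments intker {d1 d2 X Y R} m k.
Arguments ikm {d1 d2 X Y R} m k hk.

Section PF.
Context d1 d2 (X : measurableType d1) (Y : measurableType d2) (R : realType).
Variables (m : {measure set X -> \bar R}) (f : X -> Y).
Hypothesis mf : measurable_fun [set: X] f.
Definition pfm : {measure set Y -> \bar R}.
Proof. refine (pushforward m f : {measure set Y -> \bar R}); exact: mf. Defined.
Lemma pfmE A : pfm A = m (f @^-1` A). Proof. by []. Qed.
End PF.
Arguments pfm {d1 d2 X Y R} m {f} mf.

Section Disint.
Local Open Scope ereal_scope.

Lemma disint_ext (R : realType) d1 (Fl : measurableType d1)
  d2 (Fli : measurableType d2) (pi : Fl -> Fli) (mpi : measurable_fun setT pi)
  (nu : probability Fl R) (kappa : Fli -> probability Fl R)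
  (hdis : disintegration pi nu kappa) (D : set (Fli * Fl)) : measurable D ->
  nu ((fun S => (pi S, S)) @^-1` D) =
  \int[pushforward nu pi]_a kappa a (xsection D a).
Proof.
move=> mD.
have mg : measurable_fun setT (fun S => (pi S, S)).
  by apply: measurable_fun_pair => //; exact: measurable_id.
pose m1 := pfm nu mg.
pose pn := pfm nu mpi.
pose m2 := ikm pn kappa hdis.1.
have -> : nu ((fun S => (pi S, S)) @^-1` D) = m1 D by [].
have -> : \int[pushforward nu pi]_a kappa a (xsection D a) = m2 D by [].
pose C : set (set (Fli * Fl)) :=
  [set C | exists A, measurable A /\ exists B, measurable B /\ C = A `*` B].
have CI : setI_closed C.
  move=> /= _ _ [X1 [mX1 [X2 [mX2 ->]]]] [Y1 [mY1 [Y2 [mY2 ->]]]].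
  rewrite -setXI; exists (X1 `&` Y1); split; first exact: measurableI.
  by exists (X2 `&` Y2); split => //; exact: measurableI.
apply: (@measure_unique _ _ _ C (fun=> setT)) => //.
- rewrite measurable_prod_measurableType //; congr (<<s _ >>).
  rewrite predeqE; split => [[A mA [B mB <-]]|[A [mA [B [mB ->]]]]].
    by exists A; split => //; exists B.
  by exists A => //; exists B.
- move=> _; exists setT; split => //; exists setT; split => //.
  by rewrite setXTT.
- by rewrite bigcup_const.
- move=> _ [A [mA [B [mB ->]]]].
  rewrite /m1 pfmE /m2 ikmE /intker.
  have -> : (fun S => (pi S, S)) @^-1` (A `*` B) = B `&` pi @^-1` A.
    by apply/seteqP; split => x /= [].
  apply: (eq_trans (hdis.2 B A mB mA)).
  transitivity (\int[pushforward nu pi]_x kappa x (xsection (A `*` B) x)); last by [].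
  rewrite integral_mkcond; apply: eq_integral => a _.
  rewrite patchE; case: ifPn => aA.
    by rewrite in_xsectionX.
  by rewrite notin_xsectionX // measure0.
- move=> _; rewrite /m1 pfmE preimage_setT.
  apply: (le_lt_trans (probability_le1 nu measurableT)); exact: ltry.
Qed.
End Disint.

Section PFD.
Context d1 d2 (X : measurableType d1) (Y : measurableType d2) (R : realType).
Variables (P : probability X R) (f : X -> Y).
Local Open Scope ereal_scope.
Definition pfd (mf : measurable_fun [set: X] f) : set Y -> \bar R := pushforward P f.
Variable mf : measurable_fun [set: X] f.

Let pfd0 : pfd mf set0 = 0.
Proof. by rewrite /pfd /pushforward preimage_set0 measure0. Qed.

Let pfd_ge0 A : 0 <= pfd mf A.
Proof. by apply: measure_ge0. Qed.

Let pfd_sigma_additive : semi_sigma_additive (pfd mf).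
Proof.
move=> F mF tF mUF; rewrite /pfd /pushforward preimage_bigcup.
apply: measure_semi_sigma_additive.
- by move=> n; rewrite -[X in measurable X]setTI; exact: mf.
- apply/trivIsetP => /= i j _ _ ij; rewrite -preimage_setI.
  by move/trivIsetP : tF => /(_ _ _ _ _ ij) ->//; rewrite preimage_set0.
- by rewrite -preimage_bigcup -[X in measurable X]setTI; exact: mf.
Qed.

HB.instance Definition _ := isMeasure.Build _ _ _
  (pfd mf) pfd0 pfd_ge0 pfd_sigma_additive.

Let pfd_setT : pfd mf setT = 1.
Proof. by rewrite /pfd /pushforward preimage_setT probability_setT. Qed.

HB.instance Definition _ := Measure_isProbability.Build _ _ _ (pfd mf) pfd_setT.

End PFD.
Arguments pfd {d1 d2 X Y R} P {f} mf.

Section Indep.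
Local Open Scope ereal_scope.

Lemma indep_bound (R : realType) dO (Om : measurableType dO) (P : probability Om R)
  d1 (T1 : measurableType d1) d2 (T2 : measurableType d2)
  (X : Om -> T1) (Y : Om -> T2)
  (mX : measurable_fun setT X) (mY : measurable_fun setT Y)
  (nu : probability T1 R)
  (lawX : forall B, measurable B -> P (X @^-1` B) = nu B)
  (ind : indep_rv P X Y) (D : set (T1 * T2)) (mD : measurable D)
  (c : R) (c0 : (0 <= c)%R) (hc : forall u, c%:E <= nu (ysection D u)) :
  c%:E <= P ((fun w => (X w, Y w)) @^-1` D).
Proof.
have mXY : measurable_fun setT (fun w => (X w, Y w)) by exact: measurable_fun_pair.
pose Q := pfd P mY.
pose m' := pfd P mXY.
have rect A B : measurable A -> measurable B -> m' (A `*` B) = nu A * Q B.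
  move=> mA mB; rewrite /m' /Q /pfd /pushforward -lawX //.
  rewrite -ind //; congr (P _); by apply/seteqP; split => x /= [].
have e1 := product_measure_unique rect mD.
have e2 := product_measure_unique (fun A B mA mB => @product_measure2E _ _ _ _ _ nu Q A B mA mB) mD.
have -> : P ((fun w => (X w, Y w)) @^-1` D) = (nu \x^ Q) D by rewrite -e2 e1.
rewrite /product_measure2.
apply: (@le_trans _ _ (\int[Q]_u c%:E)).
  rewrite integral_cst // [X in _ * X](_ : _ = 1) ?mule1 //.
  exact: (@probability_setT _ _ _ Q).
apply: ge0_le_integral => //.
  exact: measurable_fun_ysection.
by move=> u _; exact: hc.
Qed.

End Indep.

Section Geo.
Variable R : realType.
Definition dot (u v : R * R) : R := u.1 * v.1 + u.2 * v.2.
Definition cd (u v : R * R) : R := acosc (dot u v) / 2.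

Lemma dot_in u v : S1 u -> S1 v -> -1 <= dot u v <= 1.
Proof.
rewrite /S1 /dot /= => hu hv.
have h1 : 0 <= (u.1 - v.1)^+2 + (u.2 - v.2)^+2 by rewrite addr_ge0 // sqr_ge0.
have h2 : 0 <= (u.1 + v.1)^+2 + (u.2 + v.2)^+2 by rewrite addr_ge0 // sqr_ge0.
apply/andP; split; nra.
Qed.

Lemma cdE u v : S1 u -> S1 v -> cdist u v = cd u v.
Proof.
by move=> hu hv; rewrite /cdist /cd /acosc clamp_id //; exact: dot_in.
Qed.

Lemma cd_ge0 u v : 0 <= cd u v.
Proof.
by rewrite /cd /acosc divr_ge0 // acos_ge0 // clamp_in.
Qed.

Lemma measurable_cd : measurable_fun [set: (R * R) * (R * R)] (fun p => cd p.1 p.2).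
Proof.
rewrite /cd.
apply: (measurableT_comp (f := fun r : R => r / 2)).
  by apply: measurable_funM => //; exact: measurable_cst.
apply: (measurableT_comp (measurable_acosc R)).
rewrite /dot.
apply: measurable_funD; apply: measurable_funM.
- exact: (measurableT_comp measurable_fst measurable_fst).
- exact: (measurableT_comp measurable_fst measurable_snd).
- exact: (measurableT_comp measurable_snd measurable_fst).
- exact: (measurableT_comp measurable_snd measurable_snd).
Qed.

Lemma measurable_half : measurable_fun [set: R] (fun r : R => r / 2).
Proof. by apply: measurable_funM => //; exact: measurable_cst. Qed.

End Geo.
Arguments dot {R}.
Arguments cd {R}.
Arguments cdE {R u v}.
Arguments cd_ge0 {R}.

Lemma preim_meas d1 d2 (T1 : measurableType d1) (T2 : measurableType d2)
  (g : T1 -> T2) (mg : measurable_fun setT g) (B : set T2) :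
  measurable B -> measurable (g @^-1` B).
Proof. by move=> mB; rewrite -[X in measurable X]setTI; exact: mg. Qed.

Theorem lemma6 (R : realType)
  (dO : measure_display) (Om : measurableType dO) (P : probability Om R)
  (dF : measure_display) (Fl : measurableType dF)
  (dI : measure_display) (Fli : measurableType dI)
  (pi : Fl -> Fli) (mpi : measurable_fun [set: Fl] pi)
  (nu : probability Fl R) (kappa : Fli -> probability Fl R)
  (hdis : disintegration pi nu kappa)
  (dW : measure_display) (W : measurableType dW)
  (F : int -> Om -> Fl) (Fut : int -> Om -> W)
  (mF : forall n, measurable_fun [set: Om] (F n))
  (mFut : forall n, measurable_fun [set: Om] (Fut n))
  (lawF : forall n B, measurable B -> P (F n @^-1` B) = nu B)
  (indF : forall n, indep_rv P (F n) (Fut n))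
  (theta : Fli * Fl -> R * R)
  (mtheta : measurable_fun [set: Fli * Fl] theta)
  (theta_S1 : forall p, S1 (theta p))
  (Ysel : Fli * W -> R * R)
  (mYsel : measurable_fun [set: Fli * W] Ysel)
  (Ysel_S1 : forall p, S1 (Ysel p)) :
  let Fi n w := pi (F n w) in
  let x n w := theta (Fi n w, F n w) in
  let y n w := Ysel (Fi n w, Fut n w) in
  let nun n w (B : set (R * R)) :=
      kappa (Fi n w) ((fun S => theta (Fi n w, S)) @^-1` B) in
  let In n w := @S1 R `\` cball (y n w) (cdist (x n w) (y n w) / 2) in
  forall n : int,
    (P [set w | ((1 / 2)%:E <= nun n w (In n w))%E] >= (1 / 2)%:E)%E.
Proof.
Local Open Scope ereal_scope.
move=> Fi x y nun In n.
pose h (p : (Fli * (R * R)) * R) :=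
  kappa p.1.1 [set S | ~ (cd (theta (p.1.1, S)) p.1.2 < p.2)%R].
have hk : forall U, measurable U ->
    measurable_fun [set: (Fli * (R * R)) * R] (fun p => kappa p.1.1 U).
  move=> U mU; apply: (measurableT_comp (f := fun a => kappa a U)).
    exact: hdis.1.
  exact: (measurableT_comp measurable_fst measurable_fst).
pose A := [set q : ((Fli * (R * R)) * R) * Fl |
  ~ (cd (theta (q.1.1.1, q.2)) q.1.1.2 < q.1.2)%R].
have mcdq : measurable_fun setT
    (fun q : ((Fli * (R * R)) * R) * Fl => cd (theta (q.1.1.1, q.2)) q.1.1.2).
  have mg : measurable_fun setT
      (fun q : ((Fli * (R * R)) * R) * Fl => (theta (q.1.1.1, q.2), q.1.1.2)).
    apply: measurable_fun_pair.
      have mt : measurable_fun setT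
          (fun q : ((Fli * (R * R)) * R) * Fl => (q.1.1.1, q.2)).
        apply: measurable_fun_pair; last exact: measurable_snd.
        exact: (measurableT_comp measurable_fst (measurableT_comp measurable_fst measurable_fst)).
      exact: (measurableT_comp mtheta mt).
    exact: (measurableT_comp measurable_snd (measurableT_comp measurable_fst measurable_fst)).
  exact: (measurableT_comp (measurable_cd R) mg).
have mA : measurable A.
  have := @measurable_fun_ltr _ _ _ setT _ _ mcdq
    (measurableT_comp measurable_snd measurable_fst) measurableT [set true] I.
  rewrite setTI => m1.
  rewrite (_ : A = ~` ((fun q : ((Fli * (R * R)) * R) * Fl =>
      (cd (theta (q.1.1.1, q.2)) q.1.1.2 < q.1.2)%R) @^-1` [set true])).
    exact: measurableC.
  by apply/seteqP; split => q.
have mh : measurable_fun setT h.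
  have := @xsec_meas R _ _ _ _ _ hk A mA.
  congr measurable_fun; apply/funext => p; rewrite /h; congr (kappa _ _).
  by apply/seteqP; split => S /=; rewrite /xsection /= inE.
have mH : measurable [set p : (Fli * (R * R)) * R | (1/2)%:E <= h p].
  have := @measurable_lee _ _ R setT measurableT (cst (1/2)%:E) h
    (measurable_cst _) mh.
  by rewrite setTI.
pose Gm (q : Fl * W) : (Fli * (R * R)) * R :=
  ((pi q.1, Ysel (pi q.1, q.2)), (cd (theta (pi q.1, q.1)) (Ysel (pi q.1, q.2)) / 2)%R).
have mGm : measurable_fun setT Gm.
  have m1 : measurable_fun setT (fun q : Fl * W => pi q.1).
    exact: (measurableT_comp mpi measurable_fst).
  have m2 : measurable_fun setT (fun q : Fl * W => Ysel (pi q.1, q.2)).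
    apply: (measurableT_comp mYsel (g := fun q : Fl * W => (pi q.1, q.2))).
    exact: measurable_fun_pair.
  have m3 : measurable_fun setT (fun q : Fl * W => theta (pi q.1, q.1)).
    apply: (measurableT_comp mtheta (g := fun q : Fl * W => (pi q.1, q.1))).
    exact: measurable_fun_pair.
  have m4 : measurable_fun setT
      (fun q : Fl * W => cd (theta (pi q.1, q.1)) (Ysel (pi q.1, q.2))).
    apply: (measurableT_comp (measurable_cd R)
      (g := fun q : Fl * W => (theta (pi q.1, q.1), Ysel (pi q.1, q.2)))).
    exact: measurable_fun_pair.
  apply: measurable_fun_pair; first exact: measurable_fun_pair.
  exact: (measurableT_comp (measurable_half R) m4).
pose D := Gm @^-1` [set p | (1/2)%:E <= h p].
have mD : measurable D by exact: preim_meas.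
have setE (phi : Fl -> R) r :
    [set S' | ~ (phi S' < r)%R] = [set S' | (r <= phi S')%R].
  apply/seteqP; split => S' /=.
    by move/negP; rewrite -leNgt.
  by rewrite leNgt => /negP.
have key w : nun n w (In n w) = h (Gm (F n w, Fut n w)).
  rewrite /nun /In /h /Gm /x /y /Fi /=; congr (kappa _ _).
  rewrite (cdE (theta_S1 _) (Ysel_S1 _)).
  apply/seteqP; split => S /=.
    move=> [_ hn] hlt; apply: hn; split => //.
    by rewrite (cdE (theta_S1 _) (Ysel_S1 _)).
  move=> hn; split => //; move=> [_ hlt]; apply: hn.
  by rewrite -(cdE (theta_S1 _) (Ysel_S1 _)).
have -> : [set w | (1/2)%:E <= nun n w (In n w)] =
    (fun w => (F n w, Fut n w)) @^-1` D.
  by apply/seteqP; split => w /=; rewrite key.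
apply: (@indep_bound R _ _ P _ _ _ _ (F n) (Fut n) (mF n) (mFut n) nu (lawF n) (indF n) D mD (1/2)%R).
  by [].
move=> u.
pose Gu (q : Fli * Fl) : (Fli * (R * R)) * R :=
  ((q.1, Ysel (q.1, u)), (cd (theta q) (Ysel (q.1, u)) / 2)%R).
have mGu : measurable_fun setT Gu.
  have m2 : measurable_fun setT (fun q : Fli * Fl => Ysel (q.1, u)).
    apply: (measurableT_comp mYsel (g := fun q : Fli * Fl => (q.1, u))).
    exact: measurable_fun_pair.
  have m4 : measurable_fun setT
      (fun q : Fli * Fl => cd (theta q) (Ysel (q.1, u))).
    apply: (measurableT_comp (measurable_cd R)
      (g := fun q : Fli * Fl => (theta q, Ysel (q.1, u)))).
    exact: measurable_fun_pair.
  apply: measurable_fun_pair; first exact: measurable_fun_pair.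
  exact: (measurableT_comp (measurable_half R) m4).
pose Du := Gu @^-1` [set p | (1/2)%:E <= h p].
have mDu : measurable Du by exact: preim_meas.
have -> : ysection D u = (fun S => (pi S, S)) @^-1` Du.
  by apply/seteqP; split => S; rewrite /ysection /= inE.
rewrite (@disint_ext R _ _ _ _ pi mpi nu kappa hdis Du mDu).
have -> : \int[pushforward nu pi]_a kappa a (xsection Du a) =
    \int[pfd nu mpi]_a kappa a (xsection Du a) by [].
apply: (@le_trans _ _ (\int[pfd nu mpi]_a (1/2)%:E)).
  rewrite integral_cst // [X in _ * X](_ : _ = 1) ?mule1 //.
  exact: (@probability_setT _ _ _ (pfd nu mpi)).
apply: ge0_le_integral => //.
  exact: (@xsec_meas R _ _ _ _ _ hdis.1 Du mDu).
move=> a _.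
pose z := Ysel (a, u).
pose phi S := cd (theta (a, S)) z.
have mX := measurable_xsection a mDu.
have XE : xsection Du a =
    [set t | (1/2)%:E <= kappa a [set t' | (phi t / 2 <= phi t')%R]].
  apply/seteqP; split => S; rewrite /xsection /= inE /Du /Gu /h /= setE //.
rewrite XE in mX *.
apply: (@core R _ _ (kappa a) phi _ _ mX).
  apply: (measurableT_comp (measurable_cd R)
    (g := fun S : Fl => (theta (a, S), z))).
  apply: measurable_fun_pair; last exact: measurable_cst.
  apply: (measurableT_comp mtheta (g := fun S : Fl => (a, S))).
  by apply: measurable_fun_pair; [exact: measurable_cst|exact: measurable_id].
by move=> S; exact: cd_ge0.
Qed.
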